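(* The sequence $(c_n)_{n\ge1}$ satisfies: (a) $c_{2^m+1}=m$ for every $m\ge0$; (b) $c_n<2^{\lceil\log_2 n\rceil}/3$ for every $n\ge1$; (c) $c_n<n/2$ for every $n\ge1$; (d) for every $m\ge1$ and every $p\in\{1,\dots,2^m-1\}$, $c_{2^m+p}=c_{2^{m+1}-p}$.
   Context: Bifurcating trees: rooted trees in which every internal node has exactly two children; $\mathcal{T}_n$ is the set of isomorphism classes of bifurcating trees with $n$ leaves. For a node $w$, $\kappa_T(w)$ is its number of descendant leaves. The Colless index is $\mathcal{C}(T)=\sum_{v}|\kappa_T(v_1)-\kappa_T(v_2)|$, summed over internal nodes $v$ with children $v_1,v_2$; $c_n=\min\{\mathcal{C}(T):T\in\mathcal{T}_n\}$. *)

(* Defs.v *)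
From mathcomp Require Import all_boot.
From Stdlib Require Import ClassicalEpsilon.
Set Implicit Arguments. Unset Strict Implicit. Unset Printing Implicit Defensive.

(* Rooted bifurcating trees (as plane trees; isomorphism classes are obtained
   by forgetting the order of the two children, which affects neither the
   number of leaves nor the Colless index). *)
Inductive btree : Type :=
| Leaf : btree
| Node : btree -> btree -> btree.

Fixpoint leaves (t : btree) : nat :=
  match t with
  | Leaf => 1
  | Node l r => leaves l + leaves r
  end.

Definition absdiff (a b : nat) : nat := (a - b) + (b - a).

Fixpoint colless (t : btree) : nat :=
  match t with
  | Leaf => 0
  | Node l r => absdiff (leaves l) (leaves r) + colless l + colless r
  end.

Definition colless_attained (n c : nat) : Prop :=
  exists t : btree, leaves t = n /\ colless t = c.

Definition colless_attainedb (n c : nat) : bool :=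
  if excluded_middle_informative (colless_attained n c) then true else false.

Fixpoint caterpillar (k : nat) : btree :=
  match k with
  | 0 => Leaf
  | k'.+1 => Node (caterpillar k') Leaf
  end.

Lemma leaves_caterpillar k : leaves (caterpillar k) = k.+1.
Proof. by elim: k => //= k ->; rewrite addn1. Qed.

Lemma colless_attained_ex n : exists c, colless_attainedb n.+1 c.
Proof.
exists (colless (caterpillar n)); rewrite /colless_attainedb.
case: excluded_middle_informative => // H; exfalso; apply: H.
by exists (caterpillar n); rewrite leaves_caterpillar.
Qed.

(* c_n = min { C(T) : T has n leaves }, for n >= 1 (c_0 := 0, unused) *)
Definition cmin (n : nat) : nat :=
  match n with
  | 0 => 0
  | n'.+1 => ex_minn (colless_attained_ex n')
  end.

(* Main.v *)
Require Import Defs.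
From mathcomp Require Import all_boot.
From mathcomp Require Import zify.
From Stdlib Require Import ClassicalEpsilon.
Set Implicit Arguments. Unset Strict Implicit. Unset Printing Implicit Defensive.

Fixpoint fa (k n : nat) : nat :=
  match k with
  | 0 => 0
  | k'.+1 => if n <= 1 then 0 else if odd n then fa k' n./2 + fa k' n./2.+1 + 1
             else 2 * fa k' n./2
  end.

Lemma halfE n : n = odd n + 2 * n./2.
Proof. by rewrite -{1}(odd_double_half n) -muln2 mulnC. Qed.

Lemma faS k n : fa k.+1 n = if n <= 1 then 0 else if odd n then fa k n./2 + fa k n./2.+1 + 1
             else 2 * fa k n./2.
Proof. by []. Qed.

Lemma fa_stable k n : n <= k -> fa k.+1 n = fa k n.
Proof.
elim: k n => [|k IH] n hn; first by case: n hn.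
rewrite faS [fa k.+1 n]faS.
case: ifP => // hn1; have := halfE n.
case: ifP => ho He.
  rewrite IH ?[fa k.+1 n./2.+1]IH //; lia.
rewrite IH //; lia.
Qed.

Definition f n := fa n n.

Lemma fa_eq k n : n <= k -> fa k n = f n.
Proof.
elim: k => [|k IH] hn; first by case: n hn.
case: (ltngtP n k.+1) hn => // [hlt|->] _; last by [].
by rewrite fa_stable // IH.
Qed.

Lemma f0 : f 0 = 0. Proof. by []. Qed.
Lemma f1 : f 1 = 0. Proof. by []. Qed.

Lemma half2 x : (2 * x)./2 = x.
Proof. by rewrite mul2n doubleK. Qed.
Lemma half2S x : (2 * x).+1./2 = x.
Proof.
have := halfE (2*x).+1; have -> : odd (2*x).+1 by rewrite /= oddM.
lia.
Qed.

Lemma fE2 x : 1 <= x -> f (2 * x) = 2 * f x.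
Proof.
move=> hx; rewrite /f.
have -> : 2 * x = (2 * x).-1.+1 by lia.
rewrite faS prednK; last lia.
have -> : (2 * x <= 1) = false by apply/negbTE; lia.
have -> : odd (2 * x) = false by rewrite oddM.
by rewrite half2 fa_eq //; lia.
Qed.

Lemma fE2S x : 1 <= x -> f (2 * x + 1) = f x + f (x + 1) + 1.
Proof.
move=> hx; rewrite /f addn1 faS.
have -> : ((2 * x).+1 <= 1) = false by apply/negbTE; lia.
have -> : odd (2 * x).+1 = true by rewrite /= oddM.
by rewrite half2S !fa_eq ?addn1 //; lia.
Qed.

Lemma f2n x : f (2 * x) = 2 * f x.
Proof. by case: x => [|x] //; rewrite fE2. Qed.

Lemma oddform a : exists x, a = 2 * x \/ a = 2 * x + 1.
Proof. exists a./2; have := halfE a; case: (odd a) => /=; lia. Qed.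

Lemma key_aux s a b : a + b <= s -> f (a + b) <= absdiff a b + f a + f b.
Proof.
elim: s a b => [|s IH] a b hs.
  have -> : a = 0 by lia. have -> : b = 0 by lia. by [].
have [->|a0] := posnP a; first by rewrite f0 ?add0n ?addn0 /absdiff; lia.
have [->|b0] := posnP b; first by rewrite f0 ?add0n ?addn0 /absdiff; lia.
have IH' : forall u v, u + v <= s -> f (u + v) <= absdiff u v + f u + f v by [].
rewrite /absdiff in IH' *.
have [x [ha|ha]] := oddform a; have [y [hb|hb]] := oddform b; subst a b.
- have h := IH' x y ltac:(lia).
  have -> : 2 * x + 2 * y = 2 * (x + y) by lia.
  rewrite !f2n; lia.
- have -> : 2 * x + (2 * y + 1) = 2 * (x + y) + 1 by lia.
  rewrite fE2S; last lia.
  have h1 := IH' x y ltac:(lia).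
  have h2 : f (x + y + 1) <= (x - (y+1)) + ((y+1) - x) + f x + f (y+1).
    by rewrite -addnA; apply: IH'; lia.
  rewrite f2n; destruct y as [|y].
    rewrite f1 addn0 in h1 h2 *; lia.
  rewrite fE2S; lia.
- have -> : 2 * x + 1 + 2 * y = 2 * (x + y) + 1 by lia.
  rewrite fE2S; last lia.
  have h1 := IH' x y ltac:(lia).
  have h2 : f (x + y + 1) <= (x + 1 - y) + (y - (x+1)) + f (x+1) + f y.
    by rewrite addnAC; apply: IH'; lia.
  rewrite f2n; destruct x as [|x].
    rewrite f1 add0n in h1 h2 *; lia.
  rewrite fE2S; lia.
- have -> : 2 * x + 1 + (2 * y + 1) = 2 * (x + y + 1) by lia.
  rewrite f2n.
  have h1 : f (x + y + 1) <= (x - (y+1)) + ((y+1) - x) + f x + f (y+1).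
    by rewrite -addnA; apply: IH'; lia.
  have h2 : f (x + y + 1) <= (x + 1 - y) + (y - (x+1)) + f (x+1) + f y.
    by rewrite addnAC; apply: IH'; lia.
  destruct x as [|x]; destruct y as [|y].
  + by [].
  + rewrite f1 fE2S //; rewrite !add0n in h1 h2 *.
    have h3 : f (1 + y.+1) <= (1 - y.+1) + (y.+1 - 1) + f 1 + f y.+1 by apply: IH'; lia.
    rewrite f1 add1n -addn1 in h3; lia.
  + rewrite f1 fE2S //; rewrite !addn0 in h1 h2 *.
    have h3 : f (x.+1 + 1) <= (x.+1 - 1) + (1 - x.+1) + f x.+1 + f 1 by apply: IH'; lia.
    rewrite f1 in h3; lia.
  + rewrite !fE2S //; lia.
Qed.

Lemma key a b : f (a + b) <= absdiff a b + f a + f b.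
Proof. exact: (@key_aux (a + b)). Qed.

Lemma lower t : f (leaves t) <= colless t.
Proof.
elim: t => [|l IHl r IHr] //=.
by apply: leq_trans (key _ _) _; lia.
Qed.

Lemma attained_aux s n : 1 <= n <= s -> colless_attained n (f n).
Proof.
elim: s n => [|s IH] n hn; first lia.
have [x [hx|hx]] := oddform n; subst n.
- have [tx [lx cx]] := IH x ltac:(lia).
  exists (Node tx tx) => /=; rewrite lx cx f2n /absdiff; lia.
- destruct x as [|x]; first by exists Leaf.
  have [tx [lx cx]] := IH x.+1 ltac:(lia).
  have [ty [ly cy]] := IH (x.+1 + 1) ltac:(lia).
  exists (Node ty tx) => /=; rewrite lx cx ly cy fE2S // /absdiff; lia.
Qed.

Lemma cminE n : 1 <= n -> cmin n = f n.
Proof.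
case: n => [|n] // _; rewrite /cmin.
case: ex_minnP => m hm hmin.
have hA : colless_attained n.+1 (f n.+1) by apply: (@attained_aux n.+1); lia.
have hB : colless_attained n.+1 m.
  by move: hm; rewrite /colless_attainedb; case: excluded_middle_informative.
apply/eqP; rewrite eqn_leq; apply/andP; split.
  apply: hmin; rewrite /colless_attainedb; by case: excluded_middle_informative.
have [t [lt ct]] := hB; rewrite -ct -lt; exact: lower.
Qed.

Lemma fpow m : f (2 ^ m) = 0.
Proof. by elim: m => // m IH; rewrite expnS f2n IH. Qed.

Lemma fpow1 m : f (2 ^ m + 1) = m.
Proof.
elim: m => // m IH.
rewrite expnS fE2S ?expn_gt0 // fpow IH; lia.
Qed.

Lemma pow3 e : exists q, 2 ^ e = 3 * q + 1 \/ 2 ^ e = 3 * q + 2.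
Proof.
elim: e => [|e [q [h|h]]]; first by exists 0; left.
- by exists (2 * q); right; rewrite expnS h; lia.
- by exists (2 * q + 1); left; rewrite expnS h; lia.
Qed.

Lemma bnd e : (forall n, 1 <= n <= 2 ^ e -> 3 * f n < 2 ^ e) /\
  (forall x, 1 <= x -> x + 1 <= 2 ^ e -> 3 * (f x + f (x + 1)) + 4 <= 2 ^ e.+1).
Proof.
elim: e => [|e [S T]].
  split; last lia.
  by move=> n hn; have -> : n = 1 by lia.
have [q hq] := pow3 e.
have E1 : 2 ^ e.+1 = 2 * 2 ^ e by rewrite expnS.
have E2 : 2 ^ e.+2 = 4 * 2 ^ e by rewrite !expnS; lia.
rewrite E2 E1; split.
- move=> n hn; have [x [hx|hx]] := oddform n; subst n.
    have := S x ltac:(lia); rewrite f2n; lia.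
  destruct x as [|x]; first by rewrite f1.
  have := T x.+1 ltac:(lia) ltac:(lia); rewrite fE2S //; lia.
- move=> x hx1 hx2; have [y [hy|hy]] := oddform x; subst x.
    rewrite f2n fE2S; last lia.
    have := S y ltac:(lia); have := T y ltac:(lia) ltac:(lia); lia.
  destruct y as [|y]; first by have -> : f (2*0+1) = 0 by []; have -> : f (2*0+1+1) = 0 by []; lia.
  have -> : 2 * y.+1 + 1 + 1 = 2 * (y.+1 + 1) by lia.
  rewrite f2n fE2S //.
  have := S (y.+1 + 1) ltac:(lia); have := T y.+1 ltac:(lia) ltac:(lia); lia.
Qed.

Lemma fhalf s n : 1 <= n <= s -> 2 * f n < n.
Proof.
elim: s n => [|s IH] n hn; first lia.
have [x [hx|hx]] := oddform n; subst n.
  have := IH x ltac:(lia); rewrite f2n; lia.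
destruct x as [|x]; first by rewrite f1.
have := IH x.+1 ltac:(lia); have := IH (x.+1 + 1) ltac:(lia).
rewrite fE2S //; lia.
Qed.

Lemma fsym m p : p <= 2 ^ m -> f (2 ^ m + p) = f (2 ^ m.+1 - p).
Proof.
elim: m p => [|m IH] p hp.
  by case: p hp => [|[|]].
have P1 : 1 <= 2 ^ m by rewrite expn_gt0.
have E1 : 2 ^ m.+1 = 2 * 2 ^ m by rewrite expnS.
have E2 : 2 ^ m.+2 = 4 * 2 ^ m by rewrite !expnS; lia.
rewrite E2 E1.
have [q [hq|hq]] := oddform p; subst p.
  have -> : 2 * 2 ^ m + 2 * q = 2 * (2 ^ m + q) by lia.
  have -> : 4 * 2 ^ m - 2 * q = 2 * (2 ^ m.+1 - q) by rewrite E1; lia.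
  rewrite !f2n IH //; lia.
have -> : 2 * 2 ^ m + (2 * q + 1) = 2 * (2 ^ m + q) + 1 by lia.
have -> : 4 * 2 ^ m - (2 * q + 1) = 2 * (2 ^ m.+1 - q - 1) + 1 by rewrite E1; lia.
rewrite !fE2S; [|rewrite E1; lia|lia].
rewrite IH; last lia.
have -> : 2 ^ m + q + 1 = 2 ^ m + (q + 1) by lia.
rewrite IH; last lia.
have -> : 2 ^ m.+1 - q - 1 + 1 = 2 ^ m.+1 - q by rewrite E1; lia.
have -> : 2 ^ m.+1 - (q + 1) = 2 ^ m.+1 - q - 1 by lia.
lia.
Qed.

Theorem corollary5 :
  (forall m : nat, cmin (2 ^ m + 1) = m) /\
  (forall n : nat, 1 <= n -> 3 * cmin n < 2 ^ up_log 2 n) /\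
  (forall n : nat, 1 <= n -> 2 * cmin n < n) /\
  (forall m p : nat, 1 <= m -> 1 <= p <= 2 ^ m - 1 ->
     cmin (2 ^ m + p) = cmin (2 ^ m.+1 - p)).
Proof.
split; [|split; [|split]].
- by move=> m; rewrite cminE ?fpow1 //; lia.
- move=> n hn; rewrite cminE //; apply: (bnd _).1.
  by rewrite hn up_logP.
- move=> n hn; rewrite cminE //; apply: (@fhalf n); lia.
- move=> m p hm hp; have P1 : 1 <= 2 ^ m by rewrite expn_gt0.
  have E1 : 2 ^ m.+1 = 2 * 2 ^ m by rewrite expnS.
  rewrite !cminE ?fsym //; [lia|rewrite E1; lia|lia].
Qed.
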